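(* All kernels of an orientation of a claw-free graph have the same cardinality.
   Context: A graph is claw-free if no three vertices with a common neighbor form a stable set. An orientation of a graph orients each edge in exactly one direction (not necessarily clique-acyclic). A kernel of a digraph $D=(V,A)$ is a set $S$ of pairwise non-adjacent vertices such that every $u\in V\setminus S$ has an arc $(u,v)\in A$ with $v\in S$. *)

(* Defs.v *)
From mathcomp Require Import all_boot.
Set Implicit Arguments. Unset Strict Implicit. Unset Printing Implicit Defensive.

Definition simple_graph (T : finType) (e : rel T) : Prop :=
  irreflexive e /\ symmetric e.

Definition claw_free (T : finType) (e : rel T) : Prop :=
  forall v x y z : T,
    e v x -> e v y -> e v z -> x != y -> x != z -> y != z ->
    ~ [/\ ~~ e x y, ~~ e x z & ~~ e y z].

Definition orientation (T : finType) (e d : rel T) : Prop :=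
  (forall u v, d u v -> e u v) /\
  (forall u v, e u v -> (d u v && ~~ d v u) || (d v u && ~~ d u v)).

Definition kernel (T : finType) (d : rel T) (S : {set T}) : Prop :=
  (forall u v, u \in S -> v \in S -> ~~ d u v) /\
  (forall u, u \notin S -> exists2 v, v \in S & d u v).

(* Main.v *)
Require Import Defs.
From mathcomp Require Import all_boot.
From mathcomp Require Import zify.
Set Implicit Arguments.

Lemma deg2 (T : finType) (e : rel T) (X : {set T}) v :
  claw_free e -> (forall x y, x \in X -> y \in X -> ~~ e x y) ->
  \sum_(b in X) (e v b : nat) <= 2.
Proof.
move=> cf ind.
have -> : \sum_(b in X) (e v b : nat) = #|[set b in X | e v b]|.
  rewrite -sum1_card [RHS]big_mkcond [LHS]big_mkcond /=; apply: eq_bigr => b _; rewrite inE.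
  by case: (b \in X).
rewrite leqNgt; apply/negP => H.
have /set0Pn [x xY] : [set b in X | e v b] != set0 by rewrite -card_gt0 (ltn_trans _ H).
have H1 : 1 < #|[set b in X | e v b] :\ x| by rewrite -(ltn_add2l 1) (cardsD1 x) xY in H.
have /set0Pn [y yY] : [set b in X | e v b] :\ x != set0 by rewrite -card_gt0 (ltn_trans _ H1).
have H2 : 0 < #|[set b in X | e v b] :\ x :\ y| by rewrite -(ltn_add2l 1) (cardsD1 y) yY in H1.
have /set0Pn [z zY] : [set b in X | e v b] :\ x :\ y != set0 by rewrite -card_gt0.
move: xY yY zY; rewrite !inE => /andP[xX exv] /and3P[yx yX eyv] /and4P[zy zx zX ezv].
apply: (cf v x y z) => //; first by rewrite eq_sym.
  by rewrite eq_sym.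
by rewrite eq_sym.
by split; apply: ind.
Qed.

Theorem proposition4 (T : finType) (e d : rel T) :
  simple_graph e -> claw_free e -> orientation e d ->
  forall S1 S2 : {set T}, kernel d S1 -> kernel d S2 -> #|S1| = #|S2|.
Proof.
move=> [irr sym] cf [de dor] S1 S2 K1 K2.
have indep : forall S, kernel d S -> forall x y, x \in S -> y \in S -> ~~ e x y.
  move=> S [iS _] x y xS yS; apply/negP => /dor.
  by rewrite (negbTE (iS x y xS yS)) (negbTE (iS y x yS xS)).
case: K1 => [i1 k1]; case: K2 => [i2 k2].
set A := S1 :\: S2; set B := S2 :\: S1.
have hA : forall a, a \in A -> exists2 b, b \in B & d a b.
  move=> a; rewrite inE => /andP[aS2 aS1]; have [b bS2 dab] := k2 a aS2.
  exists b => //; rewrite inE bS2 andbT; apply/negP => bS1.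
  by move: (i1 a b aS1 bS1); rewrite dab.
have hB : forall a, a \in B -> exists2 b, b \in A & d a b.
  move=> a; rewrite inE => /andP[aS2 aS1]; have [b bS2 dab] := k1 a aS2.
  exists b => //; rewrite inE bS2 andbT; apply/negP => bS1.
  by move: (i2 a b aS1 bS1); rewrite dab.
have eAB : forall a b, (e a b : nat) = d a b + d b a.
  move=> a b; case eab: (e a b).
    by move: (dor a b eab); case: (d a b); case: (d b a).
  case dab: (d a b); first by rewrite (de _ _ dab) in eab.
  case dba: (d b a) => //; move: (de _ _ dba); by rewrite sym eab.
set N := \sum_(a in A) \sum_(b in B) (e a b : nat).
have N1 : #|A| + #|B| <= N.
  have -> : N = \sum_(a in A) \sum_(b in B) (d a b : nat) + \sum_(b in B) \sum_(a in A) (d b a : nat).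
    rewrite [X in _ = _ + X]exchange_big -big_split /=; apply: eq_bigr => a _.
    rewrite -big_split /=; apply: eq_bigr => b _; exact: eAB.
  apply: leq_add; rewrite -sum1_card; apply: leq_sum.
    by move=> a aA; have [b bB dab] := hA a aA; rewrite (bigD1 b) //= dab.
  by move=> a aA; have [b bB dab] := hB a aA; rewrite (bigD1 b) //= dab.
have N2 : N <= #|A| * 2.
  rewrite -sum_nat_const; apply: leq_sum => a _; apply: deg2 => // x y.
  rewrite !inE => /andP[_ xS] /andP[_ yS]; exact: (indep S2 (conj i2 k2)).
have N3 : N <= #|B| * 2.
  rewrite /N exchange_big -sum_nat_const; apply: leq_sum => b _.
  under eq_bigr => a _ do rewrite sym.
  apply: deg2 => // x y.
  rewrite !inE => /andP[_ xS] /andP[_ yS]; exact: (indep S1 (conj i1 k1)).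
have eqAB : #|A| = #|B| by lia.
rewrite -(cardsID S2 S1) -(cardsID S1 S2) setIC -/A -/B eqAB.
by [].
Qed.
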